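(* Every $C^k$ split map $\Phi$ of the split annulus $\mathbf A$ to itself is of the form $\Phi(x,y)=(\varphi(x),\varphi(y))$, where $\varphi$ is a $C^k$ diffeomorphism of $\mathbf{RP}^1$ (a homeomorphism if $k=0$). Moreover, $\Phi$ is an isometry of $(\mathbf A,g_0)$ if and only if $\varphi$ is projective.
   Context: $\mathbf A=(\mathbf{RP}^1\times\mathbf{RP}^1)\setminus\Delta$ ($\Delta$ the diagonal) with split structure $(\mathcal L_1,\mathcal L_2)$, where $\mathcal L_i$ is the foliation by fibers of the projection to the $i$-th factor. A split map of $\mathbf A$ is a homeomorphism of $\mathbf A$ mapping each leaf of $\mathcal L_1$ onto a leaf of $\mathcal L_1$ and each leaf of $\mathcal L_2$ onto a leaf of $\mathcal L_2$; a $C^k$ split map is one that is moreover a $C^k$ diffeomorphism. $g_0$ is the de Sitter metric, $g_0=\frac{2\,\mathrm dx\,\mathrm dy}{(x-y)^2}$ in any affine chart. *)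

(* Defs.v *)
From Stdlib Require Import Reals List.
From Coquelicot Require Import Coquelicot.
Open Scope R_scope.

(** RP^1 = R ∪ {∞}; [Some x] is the point with affine coordinate x, [None] is ∞. *)
Definition P1 := option R.

(** Affine charts: for each point a of RP^1, an affine coordinate on RP^1 \ {a}.
    [chart None] is the standard coordinate x; [chart (Some r)] is x ↦ -1/(x-r)
    (sending ∞ to 0).  Values outside the domain (p = a) are junk. *)
Definition chart (a p : P1) : R :=
  match a, p with
  | None, Some x => x
  | None, None => 0
  | Some r, Some x => -1 / (x - r)
  | Some _, None => 0
  end.

(** Inverse of [chart a], a bijection R -> RP^1 \ {a}. *)
Definition cinv (a : P1) (t : R) : P1 :=
  match a with
  | None => Some t
  | Some r => if Req_EM_T t 0 then None else Some (r - 1 / t)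
  end.

Inductive reg := Fin (k : nat) | Infty.

Definition Ck1 (k : nat) (g : R -> R) (t : R) : Prop :=
  locally t (fun s => forall j, (j < k)%nat -> ex_derive (Derive_n g j) s) /\
  (forall j, (j <= k)%nat -> continuous (Derive_n g j) t).

Definition P1_Ck (k : nat) (phi : P1 -> P1) : Prop :=
  forall (a b : P1) (t : R), phi (cinv a t) <> b ->
    locally t (fun s => phi (cinv a s) <> b) /\
    Ck1 k (fun s => chart b (phi (cinv a s))) t.

Definition P1_C (r : reg) (phi : P1 -> P1) : Prop :=
  match r with Fin k => P1_Ck k phi | Infty => forall k, P1_Ck k phi end.

Definition P1_diffeo (r : reg) (phi : P1 -> P1) : Prop :=
  exists psi : P1 -> P1,
    (forall p, psi (phi p) = p) /\ (forall p, phi (psi p) = p) /\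
    P1_C r phi /\ P1_C r psi.

(** Iterated partial derivatives of f : R*R -> R; [true] = d/dx1, [false] = d/dx2. *)
Fixpoint pd (l : list bool) (f : R * R -> R) : R * R -> R :=
  match l with
  | nil => f
  | true :: l' => fun p => Derive (fun t => pd l' f (t, snd p)) (fst p)
  | false :: l' => fun p => Derive (fun t => pd l' f (fst p, t)) (snd p)
  end.

Definition Ck2 (k : nat) (f : R * R -> R) (s : R * R) : Prop :=
  locally s (fun q => forall l : list bool, (length l < k)%nat ->
      ex_derive (fun t => pd l f (t, snd q)) (fst q) /\
      ex_derive (fun t => pd l f (fst q, t)) (snd q)) /\
  (forall l : list bool, (length l <= k)%nat -> continuous (pd l f) s).

(** The split annulus A = (RP^1 x RP^1) \ Δ, as a predicate on RP^1 x RP^1. *)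
Definition InA (p : P1 * P1) : Prop := fst p <> snd p.

Definition cinv2 (a1 a2 : P1) (s : R * R) : P1 * P1 := (cinv a1 (fst s), cinv a2 (snd s)).

(** Maps A -> A of class C^k (represented by total maps on RP^1 x RP^1;
    only their values on A matter), via product affine charts. *)
Definition A_Ck (k : nat) (Phi : P1 * P1 -> P1 * P1) : Prop :=
  forall (a1 a2 b1 b2 : P1) (s : R * R),
    InA (cinv2 a1 a2 s) -> fst (Phi (cinv2 a1 a2 s)) <> b1 ->
    snd (Phi (cinv2 a1 a2 s)) <> b2 ->
    locally s (fun q => InA (cinv2 a1 a2 q) /\ fst (Phi (cinv2 a1 a2 q)) <> b1 /\
                        snd (Phi (cinv2 a1 a2 q)) <> b2) /\
    Ck2 k (fun q => chart b1 (fst (Phi (cinv2 a1 a2 q)))) s /\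
    Ck2 k (fun q => chart b2 (snd (Phi (cinv2 a1 a2 q)))) s.

Definition A_C (r : reg) (Phi : P1 * P1 -> P1 * P1) : Prop :=
  match r with Fin k => A_Ck k Phi | Infty => forall k, A_Ck k Phi end.

Definition A_diffeo (r : reg) (Phi : P1 * P1 -> P1 * P1) : Prop :=
  (forall p, InA p -> InA (Phi p)) /\
  exists Psi : P1 * P1 -> P1 * P1,
    (forall p, InA p -> InA (Psi p)) /\
    (forall p, InA p -> Psi (Phi p) = p) /\
    (forall p, InA p -> Phi (Psi p) = p) /\
    A_C r Phi /\ A_C r Psi.

(** Leaves of L1 are {(x0, y) ∈ A}, leaves of L2 are {(x, y0) ∈ A}; Phi maps each
    leaf onto a leaf of the same foliation. *)
Definition maps_L1_leaves (Phi : P1 * P1 -> P1 * P1) : Prop :=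
  forall x0 : P1, exists x1 : P1,
    (forall p, InA p -> fst p = x0 -> fst (Phi p) = x1) /\
    (forall q, InA q -> fst q = x1 -> exists p, InA p /\ fst p = x0 /\ Phi p = q).

Definition maps_L2_leaves (Phi : P1 * P1 -> P1 * P1) : Prop :=
  forall y0 : P1, exists y1 : P1,
    (forall p, InA p -> snd p = y0 -> snd (Phi p) = y1) /\
    (forall q, InA q -> snd q = y1 -> exists p, InA p /\ snd p = y0 /\ Phi p = q).

Definition split_map (r : reg) (Phi : P1 * P1 -> P1 * P1) : Prop :=
  A_diffeo r Phi /\ maps_L1_leaves Phi /\ maps_L2_leaves Phi.

Definition mobius (a b c d : R) (p : P1) : P1 :=
  match p with
  | None => if Req_EM_T c 0 then None else Some (a / c)
  | Some x => if Req_EM_T (c * x + d) 0 then None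
              else Some ((a * x + b) / (c * x + d))
  end.

Definition projective (phi : P1 -> P1) : Prop :=
  exists a b c d : R, a * d - b * c <> 0 /\ forall p, phi p = mobius a b c d p.

(** Isometry of (A, g0), g0 = 2 dx dy / (x - y)^2 in any affine chart (the same
    affine chart on both factors): Phi is C^1 and Phi^* g0 = g0, i.e. writing
    Phi = (u, v) in affine charts (a,a) -> (b,b),
    du dv = u1 v1 ds1^2 + (u1 v2 + u2 v1) ds1 ds2 + u2 v2 ds2^2 must equal
    (u - v)^2/(s1 - s2)^2 ds1 ds2. *)
Definition isometry_g0 (Phi : P1 * P1 -> P1 * P1) : Prop :=
  A_Ck 1 Phi /\
  forall (a b : P1) (s : R * R),
    InA (cinv2 a a s) -> fst (Phi (cinv2 a a s)) <> b ->
    snd (Phi (cinv2 a a s)) <> b ->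
    let u := fun q => chart b (fst (Phi (cinv2 a a q))) in
    let v := fun q => chart b (snd (Phi (cinv2 a a q))) in
    pd (true :: nil) u s * pd (true :: nil) v s = 0 /\
    pd (false :: nil) u s * pd (false :: nil) v s = 0 /\
    (pd (true :: nil) u s * pd (false :: nil) v s
       + pd (false :: nil) u s * pd (true :: nil) v s) / (u s - v s) ^ 2
      = 1 / (fst s - snd s) ^ 2.

(* Main.v *)
Require Import Defs.
From Stdlib Require Import Reals List Lra Lia ClassicalEpsilon Classical.
From Coquelicot Require Import Coquelicot.
Open Scope R_scope.

Lemma ballR (x e y : R) : ball x e y <-> Rabs (y - x) < e.
Proof. reflexivity. Qed.

Lemma ball2 (x y : R * R) e : ball x e y <-> ball (fst x) e (fst y) /\ ball (snd x) e (snd y).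
Proof. destruct x, y; reflexivity. Qed.

Lemma cont_neq {T : UniformSpace} (h : T -> R) x c :
  continuous h x -> h x <> c -> locally x (fun t => h t <> c).
Proof.
  intros Hc Hn. apply (Hc (fun z => z <> c)).
  assert (He : 0 < Rabs (h x - c)) by (apply Rabs_pos_lt; lra).
  exists (mkposreal _ He). intros y Hy.
  assert (H2 : Rabs (y - h x) < Rabs (h x - c)) by exact Hy.
  intro E; rewrite E in H2. rewrite Rabs_minus_sym in H2. lra.
Qed.

Lemma loc_fst (s1 s2 : R) (P : R -> Prop) :
  locally s1 P -> locally (s1, s2) (fun q => P (fst q)).
Proof. intros [e He]. exists e. intros y Hy. apply ball2 in Hy. apply He, Hy. Qed.

Lemma loc_snd (s1 s2 : R) (P : R -> Prop) :
  locally s2 P -> locally (s1, s2) (fun q => P (snd q)).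
Proof. intros [e He]. exists e. intros y Hy. apply ball2 in Hy. apply He, Hy. Qed.

Lemma loc_slice1 (s1 s2 : R) (P : R * R -> Prop) :
  locally (s1, s2) P -> locally s1 (fun t => P (t, s2)).
Proof. intros [e He]. exists e. intros y Hy. apply He, ball2. split; [exact Hy| apply ball_center]. Qed.

Lemma loc_slice2 (s1 s2 : R) (P : R * R -> Prop) :
  locally (s1, s2) P -> locally s2 (fun t => P (s1, t)).
Proof. intros [e He]. exists e. intros y Hy. apply He, ball2. split; [apply ball_center | exact Hy]. Qed.

Lemma cont_slice1 (f : R * R -> R) s1 s2 :
  continuous f (s1, s2) -> continuous (fun t => f (t, s2)) s1.
Proof.
  intros Hc P HP. apply Hc in HP. apply loc_slice1 in HP. exact HP.
Qed.

Lemma exd_cont (g : R -> R) x : ex_derive g x -> continuous g x.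
Proof. intros H. apply (@ex_derive_continuous R_AbsRing R_NormedModule g x H). Qed.


Lemma pd_fst (f : R * R -> R) (g : R -> R) s :
  locally s (fun q => f q = g (fst q)) ->
  pd (true :: nil) f s = Derive g (fst s) /\ pd (false :: nil) f s = 0.
Proof.
  destruct s as [s1 s2]. intros H. simpl. split.
  - apply Derive_ext_loc. apply (loc_slice1 s1 s2 (fun q => f q = g (fst q))) in H. exact H.
  - rewrite (Derive_ext_loc _ (fun _ => g s1)). apply Derive_const.
    apply (loc_slice2 s1 s2 (fun q => f q = g (fst q))) in H. exact H.
Qed.

Lemma pd_snd (f : R * R -> R) (g : R -> R) s :
  locally s (fun q => f q = g (snd q)) ->
  pd (true :: nil) f s = 0 /\ pd (false :: nil) f s = Derive g (snd s).
Proof.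
  destruct s as [s1 s2]. intros H. simpl. split.
  - rewrite (Derive_ext_loc _ (fun _ => g s2)). apply Derive_const.
    apply (loc_slice1 s1 s2 (fun q => f q = g (snd q))) in H. exact H.
  - apply Derive_ext_loc. apply (loc_slice2 s1 s2 (fun q => f q = g (snd q))) in H. exact H.
Qed.

Lemma Ck2_fst (f : R * R -> R) (g : R -> R) s :
  locally (fst s) (fun t => ex_derive g t) -> continuous (Derive g) (fst s) ->
  locally s (fun q => f q = g (fst q)) -> Ck2 1 f s.
Proof.
  destruct s as [s1 s2]. simpl. intros Hd Hc Hf. split.
  - generalize (filter_and _ _ (locally_locally _ _ Hf) (loc_fst s1 s2 _ (locally_locally _ _ Hd))).
    apply filter_imp. intros [q1 q2] [Hq Hq']. intros l Hl. destruct l; simpl in Hl; [|lia].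
    simpl. split.
    + apply ex_derive_ext_loc with g.
      * generalize (loc_slice1 q1 q2 _ Hq). apply filter_imp. intros t E; simpl in E; auto.
      * apply locally_singleton. exact Hq'.
    + apply ex_derive_ext_loc with (fun _ => g q1).
      * generalize (loc_slice2 q1 q2 _ Hq). apply filter_imp. intros t E; simpl in E; auto.
      * apply ex_derive_const.
  - intros l Hl. destruct l as [|[] [|]]; simpl in Hl; try lia; simpl.
    + apply continuous_ext_loc with (fun q => g (fst q)).
      * generalize Hf. apply filter_imp. intros q E; auto.
      * apply continuous_comp. apply continuous_fst. apply exd_cont.
        apply locally_singleton. exact Hd.
    + apply continuous_ext_loc with (fun q => Derive g (fst q)).
      * generalize (locally_locally _ _ Hf). apply filter_imp. intros [q1 q2] Hq. simpl.
        apply Derive_ext_loc. generalize (loc_slice1 q1 q2 _ Hq). apply filter_imp.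
        intros t E; simpl in E; auto.
      * apply continuous_comp. apply continuous_fst. exact Hc.
    + apply continuous_ext_loc with (fun q => 0).
      * generalize (locally_locally _ _ Hf). apply filter_imp. intros [q1 q2] Hq. simpl.
        rewrite (Derive_ext_loc _ (fun _ => g q1)). rewrite Derive_const; reflexivity.
        generalize (loc_slice2 q1 q2 _ Hq). apply filter_imp. intros t E; simpl in E; auto.
      * apply continuous_const.
Qed.

Lemma Ck2_snd (f : R * R -> R) (g : R -> R) s :
  locally (snd s) (fun t => ex_derive g t) -> continuous (Derive g) (snd s) ->
  locally s (fun q => f q = g (snd q)) -> Ck2 1 f s.
Proof.
  destruct s as [s1 s2]. simpl. intros Hd Hc Hf. split.
  - generalize (filter_and _ _ (locally_locally _ _ Hf) (loc_snd s1 s2 _ (locally_locally _ _ Hd))).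
    apply filter_imp. intros [q1 q2] [Hq Hq']. intros l Hl. destruct l; simpl in Hl; [|lia].
    simpl. split.
    + apply ex_derive_ext_loc with (fun _ => g q2).
      * generalize (loc_slice1 q1 q2 _ Hq). apply filter_imp. intros t E; simpl in E; auto.
      * apply ex_derive_const.
    + apply ex_derive_ext_loc with g.
      * generalize (loc_slice2 q1 q2 _ Hq). apply filter_imp. intros t E; simpl in E; auto.
      * apply locally_singleton. exact Hq'.
  - intros l Hl. destruct l as [|[] [|]]; simpl in Hl; try lia; simpl.
    + apply continuous_ext_loc with (fun q => g (snd q)).
      * generalize Hf. apply filter_imp. intros q E; auto.
      * apply continuous_comp. apply continuous_snd. apply exd_cont.
        apply locally_singleton. exact Hd.
    + apply continuous_ext_loc with (fun q => 0).
      * generalize (locally_locally _ _ Hf). apply filter_imp. intros [q1 q2] Hq. simpl.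
        rewrite (Derive_ext_loc _ (fun _ => g q2)). rewrite Derive_const; reflexivity.
        generalize (loc_slice1 q1 q2 _ Hq). apply filter_imp. intros t E; simpl in E; auto.
      * apply continuous_const.
    + apply continuous_ext_loc with (fun q => Derive g (snd q)).
      * generalize (locally_locally _ _ Hf). apply filter_imp. intros [q1 q2] Hq. simpl.
        apply Derive_ext_loc. generalize (loc_slice2 q1 q2 _ Hq). apply filter_imp.
        intros t E; simpl in E; auto.
      * apply continuous_comp. apply continuous_snd. exact Hc.
Qed.


Lemma mob_comp a1 b1 c1 d1 a2 b2 c2 d2 p :
  a1*d1 - b1*c1 <> 0 -> a2*d2 - b2*c2 <> 0 ->
  mobius a1 b1 c1 d1 (mobius a2 b2 c2 d2 p) =
  mobius (a1*a2+b1*c2) (a1*b2+b1*d2) (c1*a2+d1*c2) (c1*b2+d1*d2) p.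
Proof.
  intros D1 D2. unfold mobius. destruct p as [x|].
  - destruct (Req_dec_T (c2 * x + d2) 0) as [E2|E2]; lazy beta iota.
    + destruct (Req_dec_T c1 0) as [E1|E1];
      destruct (Req_dec_T ((c1 * a2 + d1 * c2) * x + (c1 * b2 + d1 * d2)) 0) as [E|E].
      * reflexivity.
      * exfalso. apply E. subst. nra.
      * exfalso. assert (a2 * x + b2 <> 0) by (intro; apply D2; nra).
        assert ((c1 * a2 + d1 * c2) * x + (c1 * b2 + d1 * d2) = c1 * (a2*x+b2)) by nra.
        apply E1. rewrite H0 in E. apply Rmult_integral in E. tauto.
      * f_equal. assert (a2 * x + b2 <> 0) by (intro; apply D2; nra).
        replace ((c1 * a2 + d1 * c2) * x + (c1 * b2 + d1 * d2)) with (c1 * (a2*x+b2)) by nra.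
        replace ((a1 * a2 + b1 * c2) * x + (a1 * b2 + b1 * d2)) with (a1 * (a2*x+b2)) by nra.
        field. auto.
    + set (y := (a2 * x + b2) / (c2 * x + d2)).
      assert (Hy : y * (c2 * x + d2) = a2 * x + b2) by (unfold y; field; auto).
      assert (K : (c1 * a2 + d1 * c2) * x + (c1 * b2 + d1 * d2) = (c1 * y + d1) * (c2 * x + d2)) by nra.
      destruct (Req_dec_T (c1 * y + d1) 0) as [E1|E1];
      destruct (Req_dec_T ((c1 * a2 + d1 * c2) * x + (c1 * b2 + d1 * d2)) 0) as [E|E].
      * reflexivity.
      * exfalso. apply E. rewrite K, E1. ring.
      * exfalso. rewrite K in E. apply Rmult_integral in E. tauto.
      * f_equal. rewrite K.
        replace ((a1 * a2 + b1 * c2) * x + (a1 * b2 + b1 * d2)) with ((a1 * y + b1) * (c2 * x + d2)) by nra.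
        field. auto.
  - destruct (Req_dec_T c2 0) as [E2|E2]; lazy beta iota.
    + assert (a2 <> 0) by (intro; apply D2; subst; nra).
      destruct (Req_dec_T c1 0) as [E1|E1];
      destruct (Req_dec_T (c1 * a2 + d1 * c2) 0) as [E|E].
      * reflexivity.
      * exfalso. apply E. subst. ring.
      * exfalso. subst. rewrite Rmult_0_r, Rplus_0_r in E. apply Rmult_integral in E. tauto.
      * f_equal. subst c2. rewrite Rmult_0_r, Rplus_0_r in E. field. split; auto.
    + set (y := a2 / c2).
      assert (Hy : y * c2 = a2) by (unfold y; field; auto).
      assert (K : c1 * a2 + d1 * c2 = (c1 * y + d1) * c2) by nra.
      destruct (Req_dec_T (c1 * y + d1) 0) as [E1|E1];
      destruct (Req_dec_T (c1 * a2 + d1 * c2) 0) as [E|E].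
      * reflexivity.
      * exfalso. apply E. rewrite K, E1. ring.
      * exfalso. rewrite K in E. apply Rmult_integral in E. tauto.
      * f_equal. rewrite K.
        replace (a1 * a2 + b1 * c2) with ((a1 * y + b1) * c2) by nra.
        field. auto.
Qed.

Lemma mob_some A B C D s :
  mobius A B C D (Some s) = if Req_EM_T (C * s + D) 0 then None else Some ((A * s + B) / (C * s + D)).
Proof. reflexivity. Qed.

Lemma det_prod a1 b1 c1 d1 a2 b2 c2 d2 :
  a1*d1 - b1*c1 <> 0 -> a2*d2 - b2*c2 <> 0 ->
  (a1*a2+b1*c2) * (c1*b2+d1*d2) - (a1*b2+b1*d2) * (c1*a2+d1*c2) <> 0.
Proof.
  intros H1 H2. replace ((a1*a2+b1*c2) * (c1*b2+d1*d2) - (a1*b2+b1*d2) * (c1*a2+d1*c2))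
    with ((a1*d1 - b1*c1) * (a2*d2 - b2*c2)) by ring.
  apply Rmult_integral_contrapositive; auto.
Qed.

Lemma cinv_mob a : exists A B C D, A*D - B*C <> 0 /\ forall t, cinv a t = mobius A B C D (Some t).
Proof.
  destruct a as [r|].
  - exists r, (-1), 1, 0. split; [lra|]. intros t. rewrite mob_some. simpl.
    destruct (Req_EM_T t 0) as [E|E]; destruct (Req_EM_T (1 * t + 0) 0) as [E'|E'];
      try reflexivity; try (exfalso; lra).
    f_equal. field. lra.
  - exists 1, 0, 0, 1. split; [lra|]. intros t. rewrite mob_some. simpl.
    destruct (Req_EM_T (0 * t + 1) 0) as [E'|E']; [exfalso; lra|]. f_equal. field.
Qed.

Lemma chart_mob b : exists A B C D, A*D - B*C <> 0 /\ mobius A B C D b = None /\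
  forall p, p <> b -> mobius A B C D p = Some (chart b p).
Proof.
  destruct b as [r|].
  - exists 0, (-1), 1, (-r). split; [lra|]. split.
    + rewrite mob_some. destruct (Req_EM_T (1 * r + - r) 0) as [E|E]; [reflexivity| exfalso; lra].
    + intros [x|] Hp.
      * rewrite mob_some. simpl. destruct (Req_EM_T (1 * x + - r) 0) as [E|E].
        -- exfalso. apply Hp. f_equal. lra.
        -- f_equal. field. intro. apply Hp. f_equal. lra.
      * unfold mobius. destruct (Req_EM_T 1 0) as [E|E]; [exfalso; lra|]. simpl. f_equal. field.
  - exists 1, 0, 0, 1. split; [lra|]. split.
    + unfold mobius. destruct (Req_EM_T 0 0) as [E|E]; [reflexivity| exfalso; lra].
    + intros [x|] Hp; [|congruence].
      rewrite mob_some. simpl. destruct (Req_EM_T (0 * x + 1) 0) as [E'|E']; [exfalso; lra|]. f_equal. field.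
Qed.

Lemma ML (phi : P1 -> P1) al be ga de (a b : P1) :
  al * de - be * ga <> 0 -> (forall p, phi p = mobius al be ga de p) ->
  exists A B C D, A * D - B * C <> 0 /\ forall s,
    (phi (cinv a s) = b <-> C * s + D = 0) /\
    (phi (cinv a s) <> b -> chart b (phi (cinv a s)) = (A * s + B) / (C * s + D)).
Proof.
  intros Hd Hphi.
  destruct (cinv_mob a) as (a1 & b1 & c1 & d1 & Hd1 & Ha).
  destruct (chart_mob b) as (a2 & b2 & c2 & d2 & Hd2 & Hb & Hb').
  assert (Key : forall s, mobius a2 b2 c2 d2 (phi (cinv a s)) =
     mobius (a2*(al*a1+be*c1)+b2*(ga*a1+de*c1)) (a2*(al*b1+be*d1)+b2*(ga*b1+de*d1))
            (c2*(al*a1+be*c1)+d2*(ga*a1+de*c1)) (c2*(al*b1+be*d1)+d2*(ga*b1+de*d1)) (Some s)).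
  { intros s. rewrite Ha, Hphi. rewrite (mob_comp al be ga de a1 b1 c1 d1) by auto.
    rewrite mob_comp; auto. apply det_prod; auto. }
  exists (a2*(al*a1+be*c1)+b2*(ga*a1+de*c1)), (a2*(al*b1+be*d1)+b2*(ga*b1+de*d1)),
     (c2*(al*a1+be*c1)+d2*(ga*a1+de*c1)), (c2*(al*b1+be*d1)+d2*(ga*b1+de*d1)). split.
  { apply det_prod; auto. apply det_prod; auto. }
  intros s. specialize (Key s). rewrite mob_some in Key.
  split.
  - split.
    + intros E. rewrite E, Hb in Key.
      destruct (Req_EM_T _ 0) as [E'|E']; [exact E'| discriminate].
    + intros E. destruct (Req_EM_T _ 0) as [E'|E']; [|contradiction].
      destruct (classic (phi (cinv a s) = b)) as [X|X]; auto.
      rewrite Hb' in Key; auto. discriminate.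
  - intros X. rewrite Hb' in Key; auto.
    destruct (Req_EM_T _ 0) as [E'|E']; [discriminate|]. injection Key. auto.
Qed.


Lemma cinv_neq a t : cinv a t <> a.
Proof.
  destruct a as [r|]; simpl; [|discriminate].
  destruct (Req_EM_T t 0) as [E|E]; [discriminate|].
  intro H. injection H. intro H'. assert (1 / t = 0) by lra.
  unfold Rdiv in H0. rewrite Rmult_1_l in H0. apply (Rinv_neq_0_compat t E). exact H0.
Qed.

Lemma other (p : P1) : exists q, q <> p.
Proof. destruct p; [exists None | exists (Some 0)]; discriminate. Qed.

Lemma other2 (p q : P1) : exists b, b <> p /\ b <> q.
Proof.
  destruct (classic (p = None)); destruct (classic (q = None)); subst.
  - exists (Some 0); split; discriminate.
  - destruct q as [y|]; [|congruence]. exists (Some (y + 1)). split; [discriminate|].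
    intro E; injection E; lra.
  - destruct p as [y|]; [|congruence]. exists (Some (y + 1)). split; [|discriminate].
    intro E; injection E; lra.
  - exists None; split; auto.
Qed.

Lemma chart_inj b p p' : p <> b -> p' <> b -> chart b p = chart b p' -> p = p'.
Proof.
  intros H1 H2 E. destruct b as [r|]; destruct p as [x|]; destruct p' as [x'|]; simpl in *;
    try congruence.
  - f_equal. assert (x - r <> 0) by (intro; apply H1; f_equal; lra).
    assert (x' - r <> 0) by (intro; apply H2; f_equal; lra).
    assert (HH : x - r = x' - r).
    { assert (/ (x - r) = / (x' - r)) by (unfold Rdiv in E; lra).
      rewrite <- (Rinv_inv (x - r)), <- (Rinv_inv (x' - r)). rewrite H3. reflexivity. }
    lra.
  - exfalso. assert (x - r <> 0) by (intro; apply H1; f_equal; lra).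
    assert (-1 / (x - r) <> 0). { unfold Rdiv. apply Rmult_integral_contrapositive. split; [lra|].
      apply Rinv_neq_0_compat; auto. } auto.
  - exfalso. assert (x' - r <> 0) by (intro; apply H2; f_equal; lra).
    assert (-1 / (x' - r) <> 0). { unfold Rdiv. apply Rmult_integral_contrapositive. split; [lra|].
      apply Rinv_neq_0_compat; auto. } auto.
Qed.

Lemma cinv_chart b p : p <> b -> cinv b (chart b p) = p.
Proof.
  intros H. destruct b as [r|]; destruct p as [x|]; simpl in *; try congruence.
  - assert (x - r <> 0) by (intro; apply H; f_equal; lra).
    destruct (Req_EM_T (-1 / (x - r)) 0) as [E|E].
    + exfalso. unfold Rdiv in E. apply Rmult_integral in E. destruct E as [E|E]; [lra|].
      apply (Rinv_neq_0_compat _ H0 E).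
    + f_equal. field. auto.
  - destruct (Req_EM_T 0 0); [reflexivity| congruence].
Qed.

Lemma id_mob p : p = mobius 1 0 0 1 p.
Proof.
  destruct p as [x|]; unfold mobius.
  - destruct (Req_EM_T (0 * x + 1) 0); [exfalso; lra|]. f_equal. field.
  - destruct (Req_EM_T 0 0); [reflexivity| congruence].
Qed.

Lemma pd_rep (f : R * R -> R) c j s :
  pd (repeat true j) f (s, c) = Derive_n (fun t => f (t, c)) j s.
Proof.
  revert s. induction j; intros s; simpl; [reflexivity|].
  apply Derive_ext. intros u. apply IHj.
Qed.

Lemma transfer k (Phi : P1 * P1 -> P1 * P1) (phi : P1 -> P1) :
  A_Ck k Phi -> (forall p, InA p -> Phi p = (phi (fst p), phi (snd p))) -> P1_Ck k phi.
Proof.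
  intros HA HPhi a b t Hb.
  set (x := cinv a t). set (y := cinv x 0).
  assert (Hxy : x <> y) by (intro E; apply (cinv_neq x 0); unfold y; auto).
  destruct (other (phi y)) as [b2 Hb2].
  assert (HIn : InA (cinv2 a x (t, 0))) by exact Hxy.
  assert (H1 : fst (Phi (cinv2 a x (t, 0))) <> b) by (rewrite HPhi; auto).
  assert (H2 : snd (Phi (cinv2 a x (t, 0))) <> b2) by (rewrite HPhi; auto).
  destruct (HA a x b b2 (t, 0) HIn H1 H2) as [Hloc [Hck _]].
  set (f := fun q => chart b (fst (Phi (cinv2 a x q)))) in Hck.
  set (g := fun s => chart b (phi (cinv a s))).
  assert (Hl1 := loc_slice1 _ _ _ Hloc). simpl in Hl1.
  assert (Heq : locally t (fun s => f (s, 0) = g s /\ phi (cinv a s) <> b)).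
  { generalize Hl1. apply filter_imp. intros s [I [J _]].
    unfold f, g. rewrite HPhi in *; auto. }
  split.
  { generalize Heq. apply filter_imp. tauto. }
  assert (Heq' : locally t (fun s => f (s, 0) = g s)) by (generalize Heq; apply filter_imp; tauto).
  assert (HL : locally t (fun s => locally s (fun s' =>
      forall j, Derive_n (fun u => f (u, 0)) j s' = Derive_n g j s'))).
  { generalize (locally_locally _ _ (locally_locally _ _ Heq')). apply filter_imp.
    intros s Hs. generalize Hs. apply filter_imp. intros s' Hs' j. apply Derive_n_ext_loc. exact Hs'. }
  split.
  - destruct Hck as [Hck1 _]. generalize (filter_and _ _ HL (loc_slice1 _ _ _ Hck1)).
    apply filter_imp. intros s [Hs Hd] j Hj. simpl in Hd.
    destruct (Hd (repeat true j)) as [Hd1 _]. { rewrite repeat_length. exact Hj. }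
    apply ex_derive_ext_loc with (Derive_n (fun u => f (u, 0)) j).
    + generalize Hs. apply filter_imp. auto.
    + apply ex_derive_ext with (fun u => pd (repeat true j) f (u, 0)); [|exact Hd1].
      intros u. apply pd_rep.
  - intros j Hj. destruct Hck as [_ Hck2].
    apply continuous_ext_loc with (Derive_n (fun u => f (u, 0)) j).
    + apply locally_singleton in HL. generalize HL. apply filter_imp. auto.
    + apply continuous_ext with (fun u => pd (repeat true j) f (u, 0)).
      * intros u. apply pd_rep.
      * apply cont_slice1. apply Hck2. rewrite repeat_length. exact Hj.
Qed.


Lemma structure r Phi : split_map r Phi ->
  exists phi psi : P1 -> P1,
    (forall p, psi (phi p) = p) /\ (forall p, phi (psi p) = p) /\
    (forall p, InA p -> Phi p = (phi (fst p), phi (snd p))) /\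
    A_C r Phi /\
    exists Psi, A_C r Psi /\ (forall p, InA p -> Psi p = (psi (fst p), psi (snd p))).
Proof.
  intros [[HinA [Psi [HinA' [HPsiPhi [HPhiPsi [HC HC']]]]]] [HL1 HL2]].
  assert (F1 : exists f1 : P1 -> P1, forall x0,
    (forall p, InA p -> fst p = x0 -> fst (Phi p) = f1 x0) /\
    (forall q, InA q -> fst q = f1 x0 -> exists p, InA p /\ fst p = x0 /\ Phi p = q)).
  { exists (fun x0 => proj1_sig (constructive_indefinite_description _ (HL1 x0))). intros x0.
    destruct (constructive_indefinite_description _ (HL1 x0)); simpl; auto. }
  assert (F2 : exists f2 : P1 -> P1, forall y0,
    (forall p, InA p -> snd p = y0 -> snd (Phi p) = f2 y0) /\
    (forall q, InA q -> snd q = f2 y0 -> exists p, InA p /\ snd p = y0 /\ Phi p = q)).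
  { exists (fun x0 => proj1_sig (constructive_indefinite_description _ (HL2 x0))). intros x0.
    destruct (constructive_indefinite_description _ (HL2 x0)); simpl; auto. }
  destruct F1 as [f1 F1]. destruct F2 as [f2 F2].
  assert (HPhi : forall p, InA p -> Phi p = (f1 (fst p), f2 (snd p))).
  { intros p Hp. rewrite (surjective_pairing (Phi p)).
    rewrite (proj1 (F1 (fst p)) p Hp eq_refl), (proj1 (F2 (snd p)) p Hp eq_refl). reflexivity. }
  assert (inj1 : forall x x', f1 x = f1 x' -> x = x').
  { intros x x' E. destruct (other (f1 x)) as [w Hw].
    assert (Hq : InA (f1 x, w)) by (intro; apply Hw; simpl in *; auto).
    destruct (proj2 (F1 x) _ Hq eq_refl) as [p [Hp [Hp1 Hp2]]].
    destruct (proj2 (F1 x') _ Hq E) as [p' [Hp' [Hp1' Hp2']]].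
    rewrite <- Hp1, <- Hp1'. rewrite <- (HPsiPhi p Hp), <- (HPsiPhi p' Hp'), Hp2, Hp2'.
    reflexivity. }
  assert (surj1 : forall z, exists x, f1 x = z).
  { intros z. destruct (other z) as [w Hw].
    assert (Hq : InA (z, w)) by (intro; apply Hw; simpl in *; auto).
    exists (fst (Psi (z, w))). rewrite <- (proj1 (F1 _) (Psi (z, w)) (HinA' _ Hq) eq_refl).
    rewrite HPhiPsi; auto. }
  assert (surj2 : forall z, exists x, f2 x = z).
  { intros z. destruct (other z) as [w Hw].
    assert (Hq : InA (w, z)) by (intro; apply Hw; simpl in *; auto).
    exists (snd (Psi (w, z))). rewrite <- (proj1 (F2 _) (Psi (w, z)) (HinA' _ Hq) eq_refl).
    rewrite HPhiPsi; auto. }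
  assert (E12 : forall x, f2 x = f1 x).
  { intros x. destruct (surj2 (f1 x)) as [y Hy].
    destruct (classic (y = x)) as [E|E]; [subst; auto|].
    exfalso. assert (Hxy : InA (x, y)) by (intro H; apply E; simpl in H; auto).
    apply (HinA _ Hxy). rewrite HPhi; simpl; auto. }
  assert (Hpsi : exists psi, forall z, f1 (psi z) = z).
  { exists (fun z => proj1_sig (constructive_indefinite_description _ (surj1 z))). intros z.
    destruct (constructive_indefinite_description _ (surj1 z)); simpl; auto. }
  destruct Hpsi as [psi Hpsi].
  exists f1, psi. split; [intros p; apply inj1; rewrite Hpsi; auto|]. split; [auto|].
  split. { intros p Hp. rewrite HPhi, E12; auto. }
  split; [auto|]. exists Psi. split; [auto|].
  intros p Hp. set (p' := Psi p).
  assert (Hp' : InA p') by (apply HinA'; auto).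
  assert (E : Phi p' = p) by (apply HPhiPsi; auto).
  rewrite HPhi, E12 in E; auto.
  rewrite <- E. simpl. rewrite (surjective_pairing p') at 1. f_equal; apply inj1; rewrite Hpsi; auto.
Qed.

Lemma diffeo_part r Phi phi psi Psi :
  (forall p, psi (phi p) = p) -> (forall p, phi (psi p) = p) ->
  (forall p, InA p -> Phi p = (phi (fst p), phi (snd p))) -> A_C r Phi ->
  A_C r Psi -> (forall p, InA p -> Psi p = (psi (fst p), psi (snd p))) ->
  P1_diffeo r phi.
Proof.
  intros H1 H2 H3 H4 H5 H6. exists psi. split; [auto|]. split; [auto|].
  destruct r as [k|]; simpl in *; split.
  - apply (transfer k Phi); auto.
  - apply (transfer k Psi); auto.
  - intros k. apply (transfer k Phi); auto.
  - intros k. apply (transfer k Psi); auto.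
Qed.


Lemma sign_eq a b : a ^ 2 = b ^ 2 -> a * b > 0 -> a = b.
Proof. intros H1 H2. assert ((a - b) * (a + b) = 0) by nra.
  apply Rmult_integral in H. destruct H; [lra|]. nra. Qed.

Lemma affine_of (u du : R -> R) :
  (forall x, is_derive u x (du x)) -> (forall x y, x <> y -> u x <> u y) ->
  (forall x y, x <> y -> du x * du y * (x - y) ^ 2 = (u x - u y) ^ 2) ->
  forall x, u x = u 0 + du 0 * x.
Proof.
  intros Hd Hi He.
  assert (nz : forall x, du x <> 0).
  { intros x E. assert (x <> x + 1) by lra. specialize (He x (x+1) H). rewrite E in He.
    apply (Hi x (x+1) H). nra. }
  assert (pos : forall x, du x * du 0 > 0).
  { intros x. destruct (Req_dec x 0) as [E|E].
    - subst. specialize (nz 0). nra.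
    - specialize (He x 0 E). specialize (Hi x 0 E).
      assert ((u x - u 0) ^ 2 > 0) by (apply pow2_gt_0; lra).
      assert ((x - 0) ^ 2 > 0) by (apply pow2_gt_0; lra). nra. }
  assert (sgn : forall x y, x <> y -> (u x - u y) * (x - y) * du 0 > 0).
  { intros x y Hxy. destruct (MVT_gen u y x du) as [c [_ Hc]].
    - intros z _. apply Hd.
    - intros z _. apply continuity_pt_filterlim. apply exd_cont. exists (du z). apply Hd.
    - rewrite Hc. specialize (pos c). assert ((x - y) * (x - y) > 0) by nra. nra. }
  set (G := fun x => sqrt (du x * du 0)).
  assert (Gp : forall x, G x > 0) by (intros x; apply sqrt_lt_R0, pos).
  assert (G2 : forall x, G x ^ 2 = du x * du 0).
  { intros x. unfold G. simpl. rewrite Rmult_1_r. apply sqrt_sqrt. specialize (pos x). lra. }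
  assert (key : forall x y, (u x - u y) * du 0 = G x * G y * (x - y)).
  { intros x y. destruct (Req_dec x y) as [E|E]; [subst; ring|].
    apply sign_eq.
    - specialize (He x y E). rewrite !Rpow_mult_distr, G2, G2. rewrite <- He. ring.
    - specialize (sgn x y E). pose proof (Gp x). pose proof (Gp y).
      assert (G x * G y > 0) by nra. nra. }
  assert (G01 : G 0 = G 1).
  { destruct (Req_dec (G 0) (G 1)) as [E|E]; auto. exfalso.
    set (xs := - G 1 / (G 0 - G 1)).
    assert (K : G xs * G 0 * (xs - 0) - G xs * G 1 * (xs - 1) = G 1 * G 0 * (1 - 0)).
    { rewrite <- key, <- key, <- key. ring. }
    assert (G 0 * xs - G 1 * (xs - 1) = 0) by (unfold xs; field; lra).
    assert (K2 : G xs * (G 0 * xs - G 1 * (xs - 1)) = G 1 * G 0) by (replace (G 1 * G 0) with (G 1 * G 0 * (1 - 0)) by ring; rewrite <- K; ring).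
    rewrite H, Rmult_0_r in K2. pose proof (Gp 0). pose proof (Gp 1). nra. }
  intros x.
  assert (K : G x * G 0 * (x - 0) - G x * G 1 * (x - 1) = G 1 * G 0 * (1 - 0)).
  { rewrite <- key, <- key, <- key. ring. }
  rewrite <- G01 in K. assert (Gx : G x = G 0).
  { pose proof (Gp 0). apply (Rmult_eq_reg_r (G 0)); [|lra]. nra. }
  specialize (key x 0). rewrite Gx in key.
  assert (G 0 * G 0 = du 0 * du 0).
  { rewrite <- G2. ring. }
  rewrite H in key.
  apply (Rmult_eq_reg_r (du 0)); [|apply nz].
  assert (E: u x * du 0 = (u x - u 0) * du 0 + u 0 * du 0) by ring. rewrite E, key. ring.
Qed.

Lemma loc_diag (x y : R) : x <> y -> locally (x, y) (fun q : R * R => fst q <> snd q).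
Proof.
  intros H.
  assert (Hc : continuous (fun q : R * R => fst q - snd q) (x, y)).
  { apply continuous_ext with (fun q : R * R => minus (fst q) (snd q)).
    - intros; reflexivity.
    - apply (@continuous_minus _ R_AbsRing R_NormedModule); [apply continuous_fst | apply continuous_snd]. }
  generalize (cont_neq _ _ 0 Hc). simpl. intros H'. generalize (H' ltac:(lra)).
  apply filter_imp. intros q Hq E. apply Hq. rewrite E. ring.
Qed.

Lemma iso_proj Phi phi psi :
  (forall p, psi (phi p) = p) ->
  (forall p, InA p -> Phi p = (phi (fst p), phi (snd p))) ->
  isometry_g0 Phi -> projective phi.
Proof.
  intros Hinv HPhi [HA Hiso].
  set (b0 := phi None). set (u := fun x => chart b0 (phi (Some x))).
  assert (Hne : forall x, phi (Some x) <> b0).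
  { intros x E. apply (f_equal psi) in E. unfold b0 in E. rewrite !Hinv in E. discriminate. }
  assert (Hinj : forall x y, x <> y -> u x <> u y).
  { intros x y Hxy E. apply chart_inj in E; auto. apply (f_equal psi) in E. rewrite !Hinv in E.
    congruence. }
  assert (Hck := transfer 1 Phi phi HA HPhi).
  assert (Hex : forall x, ex_derive u x).
  { intros x. destruct (Hck None b0 x (Hne x)) as [_ [Hl _]]. apply locally_singleton in Hl.
    apply (Hl 0%nat). lia. }
  assert (Heq : forall x y, x <> y -> Derive u x * Derive u y * (x - y) ^ 2 = (u x - u y) ^ 2).
  { intros x y Hxy.
    assert (I : InA (cinv2 None None (x, y))).
    { unfold InA, cinv2. simpl. intro E; injection E; auto. }
    assert (J1 : fst (Phi (cinv2 None None (x, y))) <> b0) by (rewrite HPhi; auto; apply Hne).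
    assert (J2 : snd (Phi (cinv2 None None (x, y))) <> b0) by (rewrite HPhi; auto; apply Hne).
    specialize (Hiso None b0 (x, y) I J1 J2). cbv zeta in Hiso.
    destruct Hiso as [_ [_ E3]].
    set (U := fun q : R * R => chart b0 (fst (Phi (cinv2 None None q)))) in E3.
    set (V := fun q : R * R => chart b0 (snd (Phi (cinv2 None None q)))) in E3.
    assert (LU : locally (x, y) (fun q => U q = u (fst q))).
    { generalize (loc_diag x y Hxy). apply filter_imp. intros q Hq. unfold U, V. rewrite HPhi.
      - reflexivity.
      - simpl. intro E; injection E; auto. }
    assert (LV : locally (x, y) (fun q => V q = u (snd q))).
    { generalize (loc_diag x y Hxy). apply filter_imp. intros q Hq. unfold U, V. rewrite HPhi.
      - reflexivity.
      - simpl. intro E; injection E; auto. }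
    destruct (pd_fst _ _ _ LU) as [P1 P2]. destruct (pd_snd _ _ _ LV) as [P3 P4].
    rewrite P1, P2, P3, P4 in E3. simpl fst in E3. simpl snd in E3.
    pose proof (locally_singleton _ _ LU) as Ux. pose proof (locally_singleton _ _ LV) as Vx.
    unfold U, V in Ux, Vx. cbv beta in Ux, Vx. rewrite Ux, Vx in E3. simpl fst in E3. simpl snd in E3.
    assert (Du : u x - u y <> 0) by (intro; apply (Hinj x y Hxy); lra).
    assert (Dx : x - y <> 0) by lra.
    set (P := Derive u x * Derive u y) in *.
    replace (P) with ((P + 0 * 0) / (u x - u y) ^ 2 * (u x - u y) ^ 2) by (field; auto).
    rewrite E3. field. auto. }
  assert (Haff := affine_of u (Derive u) (fun x => Derive_correct _ _ (Hex x)) Hinj Heq).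
  set (al := u 0) in *. set (k := Derive u 0) in *.
  assert (Hk : k <> 0).
  { intro E. apply (Hinj 0 1); [lra|]. rewrite !Haff. fold al k. rewrite E. ring. }
  assert (Hphi : forall x, phi (Some x) = cinv b0 (al + k * x)).
  { intros x. rewrite <- Haff. unfold u. rewrite cinv_chart; auto. }
  destruct b0 as [r|] eqn:Eb.
  - exists (r * k), (r * al - 1), k, al. split; [intro; apply Hk; nra|].
    intros [x|].
    + rewrite Hphi. rewrite mob_some. simpl.
      destruct (Req_EM_T (al + k * x) 0) as [E|E];
      destruct (Req_EM_T (k * x + al) 0) as [E'|E']; try reflexivity; try (exfalso; lra).
      f_equal. field. lra.
    + simpl. fold b0. rewrite Eb. destruct (Req_EM_T k 0) as [E|E]; [contradiction|].
      f_equal. field. auto.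
  - exists k, al, 0, 1. split; [lra|].
    intros [x|].
    + rewrite Hphi. rewrite mob_some. simpl.
      destruct (Req_EM_T (0 * x + 1) 0) as [E'|E']; [exfalso; lra|]. f_equal. field.
    + simpl. fold b0. rewrite Eb. destruct (Req_EM_T 0 0) as [E|E]; [reflexivity|congruence].
Qed.


Lemma mob_deriv A B C D t : C * t + D <> 0 ->
  is_derive (fun s => (A * s + B) / (C * s + D)) t ((A * D - B * C) / (C * t + D) ^ 2).
Proof. intros H. auto_derive; auto. field. auto. Qed.

Lemma lin_loc C D t0 : C * t0 + D <> 0 -> locally t0 (fun t => C * t + D <> 0).
Proof. intros H. apply (cont_neq (fun t => C * t + D)); auto. apply exd_cont. auto_derive. auto. Qed.

Lemma mob_props A B C D t0 : C * t0 + D <> 0 ->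
  locally t0 (fun t => ex_derive (fun s => (A * s + B) / (C * s + D)) t) /\
  continuous (Derive (fun s => (A * s + B) / (C * s + D))) t0.
Proof.
  intros H. split.
  - generalize (lin_loc C D t0 H). apply filter_imp. intros t Ht. eexists. apply mob_deriv; auto.
  - apply continuous_ext_loc with (fun t => (A * D - B * C) / (C * t + D) ^ 2).
    + generalize (lin_loc C D t0 H). apply filter_imp. intros t Ht.
      symmetry. apply is_derive_unique. apply mob_deriv; auto.
    + apply exd_cont. auto_derive. rewrite Rmult_1_r. apply Rmult_integral_contrapositive; auto.
Qed.

Lemma openA a1 a2 s : InA (cinv2 a1 a2 s) -> locally s (fun q => InA (cinv2 a1 a2 q)).
Proof.
  destruct s as [s1 s2]. unfold InA, cinv2. simpl. intros Hs.
  destruct (other2 (cinv a1 s1) (cinv a2 s2)) as [b [Hb1 Hb2]].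
  assert (Hd : 1 * 1 - 0 * 0 <> 0) by lra.
  destruct (ML (fun p => p) 1 0 0 1 a1 b Hd id_mob) as (A1 & B1 & C1 & D1 & _ & HM1).
  destruct (ML (fun p => p) 1 0 0 1 a2 b Hd id_mob) as (A2 & B2 & C2 & D2 & _ & HM2).
  assert (e1 : C1 * s1 + D1 <> 0) by (intro E; apply Hb1; symmetry; apply (HM1 s1); auto).
  assert (e2 : C2 * s2 + D2 <> 0) by (intro E; apply Hb2; symmetry; apply (HM2 s2); auto).
  set (h1 := fun t => (A1 * t + B1) / (C1 * t + D1)).
  set (h2 := fun t => (A2 * t + B2) / (C2 * t + D2)).
  assert (Hh : h1 s1 - h2 s2 <> 0).
  { intro E. apply Hs. apply (chart_inj b); auto. unfold h1, h2 in E.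
    rewrite (proj2 (HM1 s1)), (proj2 (HM2 s2)); auto. lra. }
  assert (Hc : continuous (fun q : R * R => h1 (fst q) - h2 (snd q)) (s1, s2)).
  { apply continuous_ext with (fun q : R * R => minus (h1 (fst q)) (h2 (snd q))).
    - intros; reflexivity.
    - apply (@continuous_minus _ R_AbsRing R_NormedModule).
      + apply (continuous_comp fst h1). apply continuous_fst. apply exd_cont.
        eexists. apply mob_deriv. auto.
      + apply (continuous_comp snd h2). apply continuous_snd. apply exd_cont.
        eexists. apply mob_deriv. auto. }
  generalize (filter_and _ _ (cont_neq _ _ 0 Hc Hh)
    (filter_and _ _ (loc_fst s1 s2 _ (lin_loc _ _ _ e1)) (loc_snd s1 s2 _ (lin_loc _ _ _ e2)))).
  apply filter_imp. intros [q1 q2] [H1 [H2 H3]]. simpl in *.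
  assert (N1 : cinv a1 q1 <> b) by (intro E; apply H2; apply (HM1 q1); auto).
  assert (N2 : cinv a2 q2 <> b) by (intro E; apply H3; apply (HM2 q2); auto).
  intro E. apply H1. unfold h1, h2. rewrite <- (proj2 (HM1 q1)), <- (proj2 (HM2 q2)); auto.
  rewrite E. ring.
Qed.

Lemma proj_iso Phi phi :
  projective phi -> (forall p, InA p -> Phi p = (phi (fst p), phi (snd p))) -> isometry_g0 Phi.
Proof.
  intros (al & be & ga & de & Hd & Hphi) HPhi. split.
  - intros a1 a2 b1 b2 [s1 s2] HIn H1 H2.
    rewrite HPhi in H1, H2; auto. simpl in H1, H2.
    destruct (ML phi al be ga de a1 b1 Hd Hphi) as (A & B & C & D & _ & HM).
    destruct (ML phi al be ga de a2 b2 Hd Hphi) as (A' & B' & C' & D' & _ & HM').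
    assert (e1 : C * s1 + D <> 0) by (intro E; apply H1; apply (HM s1); auto).
    assert (e2 : C' * s2 + D' <> 0) by (intro E; apply H2; apply (HM' s2); auto).
    assert (Lq : locally (s1, s2) (fun q => InA (cinv2 a1 a2 q) /\ C * fst q + D <> 0 /\
                                   C' * snd q + D' <> 0)).
    { apply filter_and; [apply openA; auto|].
      apply filter_and; [apply (loc_fst s1 s2 (fun t => C * t + D <> 0)) | apply (loc_snd s1 s2 (fun t => C' * t + D' <> 0))];
      apply lin_loc; auto. }
    destruct (mob_props A B C D s1 e1) as [Md1 Mc1].
    destruct (mob_props A' B' C' D' s2 e2) as [Md2 Mc2].
    split; [|split].
    + generalize Lq. apply filter_imp. intros q [I [J K]]. split; auto.
      rewrite HPhi; auto. simpl. split.
      * intro E. apply J. apply (HM (fst q)). auto.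
      * intro E. apply K. apply (HM' (snd q)). auto.
    + apply (Ck2_fst _ (fun s => (A * s + B) / (C * s + D))); auto.
      generalize Lq. apply filter_imp. intros q [I [J K]]. rewrite HPhi; auto. simpl.
      apply (HM (fst q)). intro E. apply J. apply (HM (fst q)). auto.
    + apply (Ck2_snd _ (fun s => (A' * s + B') / (C' * s + D'))); auto.
      generalize Lq. apply filter_imp. intros q [I [J K]]. rewrite HPhi; auto. simpl.
      apply (HM' (snd q)). intro E. apply K. apply (HM' (snd q)). auto.
  - intros a b [s1 s2] HIn H1 H2. cbv zeta.
    rewrite HPhi in H1, H2; auto. simpl in H1, H2.
    destruct (ML phi al be ga de a b Hd Hphi) as (A & B & C & D & HK & HM).
    assert (e1 : C * s1 + D <> 0) by (intro E; apply H1; apply (HM s1); auto).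
    assert (e2 : C * s2 + D <> 0) by (intro E; apply H2; apply (HM s2); auto).
    assert (Hs : s1 <> s2) by (intro E; apply HIn; subst; reflexivity).
    assert (Lq : locally (s1, s2) (fun q => InA (cinv2 a a q) /\ C * fst q + D <> 0 /\
                                   C * snd q + D <> 0)).
    { apply filter_and; [apply openA; auto|].
      apply filter_and; [apply (loc_fst s1 s2 (fun t => C * t + D <> 0)) | apply (loc_snd s1 s2 (fun t => C * t + D <> 0))];
      apply lin_loc; auto. }
    set (m := fun s => (A * s + B) / (C * s + D)).
    set (U := fun q : R * R => chart b (fst (Phi (cinv2 a a q)))).
    set (V := fun q : R * R => chart b (snd (Phi (cinv2 a a q)))).
    assert (LU : locally (s1, s2) (fun q => U q = m (fst q))).
    { generalize Lq. apply filter_imp. intros q [I [J K]]. unfold U. rewrite HPhi; auto. simpl.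
      apply (HM (fst q)). intro E. apply J. apply (HM (fst q)). auto. }
    assert (LV : locally (s1, s2) (fun q => V q = m (snd q))).
    { generalize Lq. apply filter_imp. intros q [I [J K]]. unfold V. rewrite HPhi; auto. simpl.
      apply (HM (snd q)). intro E. apply K. apply (HM (snd q)). auto. }
    destruct (pd_fst _ _ _ LU) as [P1 P2]. destruct (pd_snd _ _ _ LV) as [P3 P4].
    rewrite P1, P2, P3, P4. simpl fst. simpl snd.
    pose proof (locally_singleton _ _ LU) as Ux. pose proof (locally_singleton _ _ LV) as Vx.
    unfold U, V in Ux, Vx. cbv beta in Ux, Vx. rewrite Ux, Vx. simpl fst. simpl snd.
    replace (Derive m s1) with ((A * D - B * C) / (C * s1 + D) ^ 2)
      by (symmetry; apply is_derive_unique; apply mob_deriv; auto).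
    replace (Derive m s2) with ((A * D - B * C) / (C * s2 + D) ^ 2)
      by (symmetry; apply is_derive_unique; apply mob_deriv; auto).
    split; [ring|]. split; [ring|].
    unfold m.
    assert (Hdiff : (A * s1 + B) / (C * s1 + D) - (A * s2 + B) / (C * s2 + D) =
                    (A * D - B * C) * (s1 - s2) / ((C * s1 + D) * (C * s2 + D))) by (field; auto).
    rewrite Hdiff. field. repeat split; auto. lra.
Qed.


Theorem mainTheorem12 (r : reg) (Phi : P1 * P1 -> P1 * P1) :
  split_map r Phi ->
  exists phi : P1 -> P1,
    P1_diffeo r phi /\
    (forall p : P1 * P1, InA p -> Phi p = (phi (fst p), phi (snd p))) /\
    (isometry_g0 Phi <-> projective phi).
Proof.
  intros Hs. destruct (structure r Phi Hs) as (phi & psi & Hpf & Hfp & HPhi & HC & Psi & HCP & HPsi).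
  exists phi. split; [apply (diffeo_part r Phi phi psi Psi); auto|]. split; [auto|]. split.
  - intros Hi. apply (iso_proj Phi phi psi); auto.
  - intros Hp. apply (proj_iso Phi phi); auto.
Qed.
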